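(* Consider the system described in the context and assume (H1) and (H2). Then every steady state of the system is of one of the following nine types ($i\in\{1,2\}$), with components listed as $(S_1^1,X_1^1,S_2^1,X_2^1\mid S_1^2,X_1^2,S_2^2,X_2^2)$, and each type exists if and only if the stated existence condition holds: \begin{enumerate} \item $\mathcal{E}_{00}^{00}=(S_1^{\mathrm{in}},0,S_2^{\mathrm{in}},0\mid S_1^{\mathrm{in}},0,S_2^{\mathrm{in}},0)$; always exists. \item $\mathcal{E}_{00}^{0i}=\bigl(S_1^{\mathrm{in}},0,S_2^{\mathrm{in}},0\mid S_1^{\mathrm{in}},0,\lambda_2^{2i},\tfrac{S_2^{\mathrm{in}}-\lambda_2^{2i}}{\alpha k_3}\bigr)$; exists iff $S_2^{\mathrm{in}}>\lambda_2^{2i}$. \item $\mathcal{E}_{00}^{10}=\bigl(S_1^{\mathrm{in}},0,S_2^{\mathrm{in}},0\mid \lambda_1^2,\tfrac{S_1^{\mathrm{in}}-\lambda_1^2}{\alpha k_1},S_2^{\mathrm{in}}+\tfrac{k_2}{k_1}(S_1^{\mathrm{in}}-\lambda_1^2),0\bigr)$; exists iff $S_1^{\mathrm{in}}>\lambda_1^2$. \item $\mathcal{E}_{00}^{1i}=\bigl(S_1^{\mathrm{in}},0,S_2^{\mathrm{in}},0\mid \lambda_1^2,\tfrac{S_1^{\mathrm{in}}-\lambda_1^2}{\alpha k_1},\lambda_2^{2i},\tfrac{k_2(S_1^{\mathrm{in}}-F_{2i})}{\alpha k_1k_3}\bigr)$; exists iff $S_1^{\mathrm{in}}>\max(\lambda_1^2,F_{2i})$.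 \item $\mathcal{E}_{10}^{10}=\bigl(\lambda_1^1,X_1^{1*},S_2^{\mathrm{in}}+\tfrac{k_2}{k_1}(S_1^{\mathrm{in}}-\lambda_1^1),0\mid S_1^{\mathrm{in}}-\alpha k_1X_1^{2*},X_1^{2*},S_2^{\mathrm{in}}+\alpha k_2X_1^{2*},0\bigr)$; exists iff $S_1^{\mathrm{in}}>\lambda_1^1$. \item $\mathcal{E}_{10}^{1i}=\bigl(\lambda_1^1,X_1^{1*},S_2^{\mathrm{in}}+\tfrac{k_2}{k_1}(S_1^{\mathrm{in}}-\lambda_1^1),0\mid S_1^{\mathrm{in}}-\alpha k_1X_1^{2*},X_1^{2*},\lambda_2^{2i},\tfrac{\phi_i}{\alpha k_3}\bigr)$; exists iff $S_1^{\mathrm{in}}>\lambda_1^1$ and $\phi_i>0$. \item $\mathcal{E}_{0i}^{01}=\bigl(S_1^{\mathrm{in}},0,\lambda_2^{1i},\tfrac{S_2^{\mathrm{in}}-\lambda_2^{1i}}{\alpha k_3}\mid S_1^{\mathrm{in}},0,S_2^{\mathrm{in}}-\alpha k_3X_2^{2*},X_2^{2*}\bigr)$, where $X_2^{2*}$ is a solution of $f_2(x)=g_2(x)$ built with $S_2^{1*}=\lambda_2^{1i}$, $X_1^{1*}=0$, $X_1^{2*}=0$, $X_2^{1*}=\tfrac{S_2^{\mathrm{in}}-\lambda_2^{1i}}{\alpha k_3}$; exists iff $S_2^{\mathrm{in}}>\lambda_2^{1i}$. \item $\mathcal{E}_{0i}^{11}=\bigl(S_1^{\mathrm{in}},0,\lambda_2^{1i},\tfrac{S_2^{\mathrm{in}}-\lambda_2^{1i}}{\alpha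 k_3}\mid \lambda_1^2,\tfrac{S_1^{\mathrm{in}}-\lambda_1^2}{\alpha k_1},\tfrac{k_2}{k_1}(S_1^{\mathrm{in}}-\lambda_1^2)+S_2^{\mathrm{in}}-\alpha k_3X_2^{2*},X_2^{2*}\bigr)$, where $X_2^{2*}$ is a solution of $f_2(x)=g_2(x)$ built with $S_2^{1*}=\lambda_2^{1i}$, $X_1^{1*}=0$, $X_1^{2*}=\tfrac{S_1^{\mathrm{in}}-\lambda_1^2}{\alpha k_1}$, $X_2^{1*}=\tfrac{S_2^{\mathrm{in}}-\lambda_2^{1i}}{\alpha k_3}$; exists iff $S_1^{\mathrm{in}}>\lambda_1^2$ and $S_2^{\mathrm{in}}>\lambda_2^{1i}$. \item $\mathcal{E}_{1i}^{11}=\bigl(\lambda_1^1,X_1^{1*},\lambda_2^{1i},\tfrac{k_2(S_1^{\mathrm{in}}-F_{1i})}{\alpha k_1k_3}\mid S_1^{\mathrm{in}}-\alpha k_1X_1^{2*},X_1^{2*},S_2^{\mathrm{in}}+\alpha k_2X_1^{2*}-\alpha k_3X_2^{2*},X_2^{2*}\bigr)$, where $X_2^{2*}$ is a solution of $f_2(x)=g_2(x)$ built with $S_2^{1*}=\lambda_2^{1i}$, $X_1^{1*}=\tfrac{S_1^{\mathrm{in}}-\lambda_1^1}{\alpha k_1}$, $X_1^{2*}$ as defined in the context, $X_2^{1*}=\tfrac{k_2(S_1^{\mathrm{in}}-F_{1i})}{\alpha k_1k_3}$; exists iff $S_1^{\mathrm{in}}>\max(\lambda_1^1,F_{1i})$.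 \end{enumerate}
   Context: Consider the system of ODEs for $\xi=(S_1^1,X_1^1,S_2^1,X_2^1,S_1^2,X_1^2,S_2^2,X_2^2)\in\mathbb{R}_+^8$: $\dot S_1^1=D_1(S_1^{\mathrm{in}}-S_1^1)-k_1\mu_1(S_1^1)X_1^1$, $\dot X_1^1=(\mu_1(S_1^1)-\alpha D_1)X_1^1$, $\dot S_2^1=D_1(S_2^{\mathrm{in}}-S_2^1)+k_2\mu_1(S_1^1)X_1^1-k_3\mu_2(S_2^1)X_2^1$, $\dot X_2^1=(\mu_2(S_2^1)-\alpha D_1)X_2^1$, $\dot S_1^2=D_2(S_1^1-S_1^2)-k_1\mu_1(S_1^2)X_1^2$, $\dot X_1^2=\alpha D_2(X_1^1-X_1^2)+\mu_1(S_1^2)X_1^2$, $\dot S_2^2=D_2(S_2^1-S_2^2)+k_2\mu_1(S_1^2)X_1^2-k_3\mu_2(S_2^2)X_2^2$, $\dot X_2^2=\alpha D_2(X_2^1-X_2^2)+\mu_2(S_2^2)X_2^2$. Here $D>0$, $r\in(0,1)$, $r_1=r$, $r_2=1-r$, $D_i=D/r_i$, $\alpha\in(0,1)$, $k_1,k_2,k_3>0$, $S_1^{\mathrm{in}},S_2^{\mathrm{in}}>0$. The functions $\mu_1,\mu_2\in\mathcal C^1(\mathbb R_+)$ satisfy (H1): $\mu_1(0)=0$, $\lim_{s\to\infty}\mu_1(s)=m_1$, $\mu_1'(s)>0$ for $s>0$; (H2): $\mu_2(0)=0$, $\lim_{s\to\infty}\mu_2(s)=0$, and there is $S_2^{\mathrm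 m}>0$ with $\mu_2'>0$ on $(0,S_2^{\mathrm m})$ and $\mu_2'<0$ on $(S_2^{\mathrm m},\infty)$. Notation ($i,j\in\{1,2\}$): $\lambda_1^i$ is the unique solution of $\mu_1(S)=\alpha D_i$ when $D<r_im_1/\alpha$, and $\lambda_1^i=+\infty$ otherwise; $\lambda_2^{i1}<\lambda_2^{i2}$ are the two solutions of $\mu_2(S)=\alpha D_i$ when $D\le r_i\mu_2(S_2^{\mathrm m})/\alpha$, and $+\infty$ otherwise; $F_{ij}=\lambda_1^i+\frac{k_1}{k_2}(\lambda_2^{ij}-S_2^{\mathrm{in}})$. When $S_1^{\mathrm{in}}>\lambda_1^1$, put $X_1^{1*}=(S_1^{\mathrm{in}}-\lambda_1^1)/(\alpha k_1)$, $f_1(x)=\mu_1(S_1^{\mathrm{in}}-\alpha k_1x)$ on $[0,S_1^{\mathrm{in}}/(\alpha k_1)]$, $g_1(x)=\alpha D_2(x-X_1^{1*})/x$, and let $X_1^{2*}$ be the unique solution of $f_1(x)=g_1(x)$ in $(X_1^{1*},S_1^{\mathrm{in}}/(\alpha k_1))$; set $\phi_j=S_2^{\mathrm{in}}+\alpha k_2X_1^{2*}-\lambda_2^{2j}$. Given numbers $S_2^{1*},X_1^{1*},X_2^{1*},X_1^{2*}$ (specified in each case), define $g_2(x)=\alpha D_2(x-X_2^{1*})/x$ on $(0,\infty)$ and $f_2(x)=\mu_2\bigl(S_2^{1*}-\alpha k_2(X_1^{1*}-X_1^{2*})+\alpha k_3(X_2^{1*}-x)\bigr)$ on $[0,d]$,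 $d=X_2^{1*}+(S_2^{1*}-\alpha k_2(X_1^{1*}-X_1^{2*}))/(\alpha k_3)$. *)

(* Defs.v *)
From Stdlib Require Import Reals ClassicalEpsilon.
From Coquelicot Require Import Coquelicot.
Open Scope R_scope.

Record sys := mkSys {
  D : R; r : R; alpha : R; k1 : R; k2 : R; k3 : R;
  S1in : R; S2in : R;
  mu1 : R -> R; mu2 : R -> R;
  m1 : R;    (* limit of mu1 at +oo, pinned down by (H1) *)
  S2m : R    (* the peak point S_2^m of mu2, pinned down by (H2) *)
}.

Definition C1_Rplus_with (f f' : R -> R) : Prop :=
  (forall s, 0 < s -> is_derive f s (f' s)) /\
  filterlim (fun h => (f h - f 0) / h) (at_right 0) (locally (f' 0)) /\
  (forall s, 0 <= s ->
     filterlim f' (within (fun t => 0 <= t) (locally s)) (locally (f' s))).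

Definition H1 (mu : R -> R) (m : R) : Prop :=
  exists mu', C1_Rplus_with mu mu' /\
    mu 0 = 0 /\ is_lim mu p_infty (Finite m) /\
    (forall s, 0 < s -> mu' s > 0).

Definition H2 (mu : R -> R) (Sm : R) : Prop :=
  exists mu', C1_Rplus_with mu mu' /\
    mu 0 = 0 /\ is_lim mu p_infty (Finite 0) /\ 0 < Sm /\
    (forall s, 0 < s < Sm -> mu' s > 0) /\
    (forall s, Sm < s -> mu' s < 0).

Inductive idx := I1 | I2.

Definition ri (p : sys) (i : idx) : R :=
  match i with I1 => r p | I2 => 1 - r p end.
Definition Di (p : sys) (i : idx) : R := D p / ri p i.

Definition lam1 (p : sys) (i : idx) : Rbar :=
  match Rlt_dec (D p) (ri p i * m1 p / alpha p) with
  | left _ => Finite (epsilon (inhabits 0)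
                (fun S => 0 <= S /\ mu1 p S = alpha p * Di p i))
  | right _ => p_infty
  end.

(** lambda_2^{i1} <= lambda_2^{i2}: the smaller and the larger (nonnegative)
    solutions of mu2(S) = alpha D_i when D <= r_i mu2(S_2^m)/alpha,
    and +oo otherwise. *)
Definition lam2 (p : sys) (i j : idx) : Rbar :=
  match Rle_dec (D p) (ri p i * mu2 p (S2m p) / alpha p) with
  | left _ => Finite (epsilon (inhabits 0) (fun S =>
       0 <= S /\ mu2 p S = alpha p * Di p i /\
       forall S', 0 <= S' -> mu2 p S' = alpha p * Di p i ->
         match j with I1 => S <= S' | I2 => S' <= S end))
  | right _ => p_infty
  end.

Definition Fij (p : sys) (i j : idx) : Rbar :=
  Rbar_plus (lam1 p i)
    (Rbar_mult (Finite (k1 p / k2 p)) (Rbar_minus (lam2 p i j) (Finite (S2in p)))).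

(** X_1^{1*}, f_1, g_1 and X_1^{2*} (meaningful when S1in > lambda_1^1). *)
Definition X11star (p : sys) : R := (S1in p - real (lam1 p I1)) / (alpha p * k1 p).
Definition f1 (p : sys) (x : R) : R := mu1 p (S1in p - alpha p * k1 p * x).
Definition g1 (p : sys) (x : R) : R := alpha p * Di p I2 * (x - X11star p) / x.
Definition X12star (p : sys) : R :=
  epsilon (inhabits 0) (fun x =>
    X11star p < x < S1in p / (alpha p * k1 p) /\ f1 p x = g1 p x).

Definition phi (p : sys) (j : idx) : Rbar :=
  Rbar_minus (Finite (S2in p + alpha p * k2 p * X12star p)) (lam2 p I2 j).

(** f_2, g_2 and the right end d of the domain of f_2, given
    S21 = S_2^{1*}, X11 = X_1^{1*}, X12 = X_1^{2*}, X21 = X_2^{1*}. *)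
Definition g2 (p : sys) (X21 x : R) : R := alpha p * Di p I2 * (x - X21) / x.
Definition f2 (p : sys) (S21 X11 X12 X21 x : R) : R :=
  mu2 p (S21 - alpha p * k2 p * (X11 - X12) + alpha p * k3 p * (X21 - x)).
Definition d2 (p : sys) (S21 X11 X12 X21 : R) : R :=
  X21 + (S21 - alpha p * k2 p * (X11 - X12)) / (alpha p * k3 p).
Definition sol2 (p : sys) (S21 X11 X12 X21 x : R) : Prop :=
  0 < x <= d2 p S21 X11 X12 X21 /\ f2 p S21 X11 X12 X21 x = g2 p X21 x.

Record state := mkState {
  S11 : R; X11 : R; S21 : R; X21 : R;
  S12 : R; X12 : R; S22 : R; X22 : R
}.

Definition steady (p : sys) (xi : state) : Prop :=
  let a := alpha p in let D1 := Di p I1 in let D2 := Di p I2 in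
  let m1f := mu1 p in let m2f := mu2 p in
  (0 <= S11 xi /\ 0 <= X11 xi /\ 0 <= S21 xi /\ 0 <= X21 xi /\
   0 <= S12 xi /\ 0 <= X12 xi /\ 0 <= S22 xi /\ 0 <= X22 xi) /\
  D1 * (S1in p - S11 xi) - k1 p * m1f (S11 xi) * X11 xi = 0 /\
  (m1f (S11 xi) - a * D1) * X11 xi = 0 /\
  D1 * (S2in p - S21 xi) + k2 p * m1f (S11 xi) * X11 xi
     - k3 p * m2f (S21 xi) * X21 xi = 0 /\
  (m2f (S21 xi) - a * D1) * X21 xi = 0 /\
  D2 * (S11 xi - S12 xi) - k1 p * m1f (S12 xi) * X12 xi = 0 /\
  a * D2 * (X11 xi - X12 xi) + m1f (S12 xi) * X12 xi = 0 /\
  D2 * (S21 xi - S22 xi) + k2 p * m1f (S12 xi) * X12 xi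
     - k3 p * m2f (S22 xi) * X22 xi = 0 /\
  a * D2 * (X21 xi - X22 xi) + m2f (S22 xi) * X22 xi = 0.

Inductive ty :=
  | E00_00
  | E00_0 (i : idx)
  | E00_10
  | E00_1 (i : idx)
  | E10_10
  | E10_1 (i : idx)
  | E0_01 (i : idx)
  | E0_11 (i : idx)
  | E1_11 (i : idx).

Definition of_type (p : sys) (t : ty) (xi : state) : Prop :=
  let s1 := S1in p in let s2 := S2in p in let a := alpha p in
  match t with
  | E00_00 => xi = mkState s1 0 s2 0 s1 0 s2 0
  | E00_0 i =>
      is_finite (lam2 p I2 i) /\
      let L := real (lam2 p I2 i) in
      xi = mkState s1 0 s2 0 s1 0 L ((s2 - L) / (a * k3 p)) /\ 0 < X22 xi
  | E00_10 =>
      is_finite (lam1 p I2) /\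
      let L := real (lam1 p I2) in
      xi = mkState s1 0 s2 0 L ((s1 - L) / (a * k1 p))
                   (s2 + k2 p / k1 p * (s1 - L)) 0 /\ 0 < X12 xi
  | E00_1 i =>
      is_finite (lam1 p I2) /\ is_finite (lam2 p I2 i) /\
      let L := real (lam1 p I2) in let L' := real (lam2 p I2 i) in
      let F := real (Fij p I2 i) in
      xi = mkState s1 0 s2 0 L ((s1 - L) / (a * k1 p))
                   L' (k2 p * (s1 - F) / (a * k1 p * k3 p)) /\
      0 < X12 xi /\ 0 < X22 xi
  | E10_10 =>
      is_finite (lam1 p I1) /\
      let L := real (lam1 p I1) in let x12 := X12star p in
      xi = mkState L (X11star p) (s2 + k2 p / k1 p * (s1 - L)) 0
                   (s1 - a * k1 p * x12) x12 (s2 + a * k2 p * x12) 0 /\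
      0 < X11 xi /\ 0 < X12 xi
  | E10_1 i =>
      is_finite (lam1 p I1) /\ is_finite (lam2 p I2 i) /\
      let L := real (lam1 p I1) in let L' := real (lam2 p I2 i) in
      let x12 := X12star p in
      xi = mkState L (X11star p) (s2 + k2 p / k1 p * (s1 - L)) 0
                   (s1 - a * k1 p * x12) x12 L' (real (phi p i) / (a * k3 p)) /\
      0 < X11 xi /\ 0 < X12 xi /\ 0 < X22 xi
  | E0_01 i =>
      is_finite (lam2 p I1 i) /\
      let L := real (lam2 p I1 i) in let x21 := (s2 - L) / (a * k3 p) in
      exists x, sol2 p L 0 0 x21 x /\
        xi = mkState s1 0 L x21 s1 0 (s2 - a * k3 p * x) x /\
        0 < X21 xi /\ 0 < X22 xi
  | E0_11 i =>
      is_finite (lam1 p I2) /\ is_finite (lam2 p I1 i) /\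
      let L := real (lam1 p I2) in let L' := real (lam2 p I1 i) in
      let x21 := (s2 - L') / (a * k3 p) in let x12 := (s1 - L) / (a * k1 p) in
      exists x, sol2 p L' 0 x12 x21 x /\
        xi = mkState s1 0 L' x21 L x12
                     (k2 p / k1 p * (s1 - L) + s2 - a * k3 p * x) x /\
        0 < X21 xi /\ 0 < X12 xi /\ 0 < X22 xi
  | E1_11 i =>
      is_finite (lam1 p I1) /\ is_finite (lam2 p I1 i) /\
      let L := real (lam1 p I1) in let L' := real (lam2 p I1 i) in
      let F := real (Fij p I1 i) in
      let x11 := (s1 - L) / (a * k1 p) in let x12 := X12star p in
      let x21 := k2 p * (s1 - F) / (a * k1 p * k3 p) in
      exists x, sol2 p L' x11 x12 x21 x /\
        xi = mkState L x11 L' x21 (s1 - a * k1 p * x12) x12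
                     (s2 + a * k2 p * x12 - a * k3 p * x) x /\
        0 < X11 xi /\ 0 < X21 xi /\ 0 < X12 xi /\ 0 < X22 xi
  end.

Definition cond (p : sys) (t : ty) : Prop :=
  let s1 := Finite (S1in p) in let s2 := Finite (S2in p) in
  match t with
  | E00_00 => True
  | E00_0 i => Rbar_lt (lam2 p I2 i) s2
  | E00_10 => Rbar_lt (lam1 p I2) s1
  | E00_1 i => Rbar_lt (lam1 p I2) s1 /\ Rbar_lt (Fij p I2 i) s1
  | E10_10 => Rbar_lt (lam1 p I1) s1
  | E10_1 i => Rbar_lt (lam1 p I1) s1 /\ Rbar_lt (Finite 0) (phi p i)
  | E0_01 i => Rbar_lt (lam2 p I1 i) s2
  | E0_11 i => Rbar_lt (lam1 p I2) s1 /\ Rbar_lt (lam2 p I1 i) s2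
  | E1_11 i => Rbar_lt (lam1 p I1) s1 /\ Rbar_lt (Fij p I1 i) s1
  end.

(* Main.v *)
Require Import Defs.
From Stdlib Require Import Reals Lra ClassicalEpsilon.
From Coquelicot Require Import Coquelicot.
Require Import Defs.
Open Scope R_scope.

Lemma ballR (x e y : R) : ball x e y <-> Rabs (y - x) < e.
Proof. unfold ball; simpl; unfold AbsRing_ball, abs, minus, plus, opp; simpl. tauto. Qed.

Ltac unball H := unfold ball in H; simpl in H; unfold AbsRing_ball, abs, minus, plus, opp in H; simpl in H;
  try match type of H with context [Rabs (?a + - ?b)] => change (a + - b) with (a - b) in H end.

Lemma right_cont0 (f f' : R -> R) : C1_Rplus_with f f' ->
  forall eps, 0 < eps -> exists del, 0 < del /\
    forall h, 0 <= h < del -> Rabs (f h - f 0) < eps.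
Proof.
  intros [_ [Hr _]] eps Heps.
  apply filterlim_locally with (eps := mkposreal 1 Rlt_0_1) in Hr.
  destruct Hr as [[d Hd] Hd'].
  set (K := Rabs (f' 0) + 1).
  assert (HK : 0 < K) by (unfold K; pose proof (Rabs_pos (f' 0)); lra).
  exists (Rmin d (eps / K)). split.
  { apply Rmin_pos; [exact Hd| apply Rdiv_lt_0_compat; lra]. }
  intros h [H0 Hh].
  destruct (Req_dec h 0) as [->|Hn].
  { rewrite Rminus_diag, Rabs_R0; lra. }
  assert (Hpos : 0 < h) by lra.
  assert (Hb : ball 0 d h).
  { apply ballR. rewrite Rminus_0_r, Rabs_pos_eq by lra.
    pose proof (Rmin_l d (eps/K)); simpl in *; lra. }
  specialize (Hd' h Hb Hpos). unball Hd'.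
  assert (Hq : Rabs ((f h - f 0) / h) < K).
  { unfold K. pose proof (Rabs_triang_inv ((f h - f 0) / h) (f' 0)). lra. }
  replace (f h - f 0) with (((f h - f 0) / h) * h) by (field; lra).
  rewrite Rabs_mult, (Rabs_pos_eq h) by lra.
  assert (h < eps / K) by (pose proof (Rmin_r d (eps/K)); lra).
  apply Rle_lt_trans with (K * h).
  { apply Rmult_le_compat_r; lra. }
  apply Rmult_lt_reg_r with (/K). apply Rinv_0_lt_compat; lra.
  replace (K * h * / K) with h by (field; lra). unfold Rdiv in *. lra.
Qed.

Lemma cont_ext (f f' : R -> R) : C1_Rplus_with f f' ->
  forall x, continuity_pt (fun t => f (Rmax 0 t)) x.
Proof.
  intros HC x. apply continuity_pt_locally. intros [eps Heps]; simpl.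
  destruct (Rtotal_order x 0) as [Hx|[Hx|Hx]].
  - assert (Hd : 0 < - x) by lra.
    exists (mkposreal _ Hd). intros y Hy. unball Hy.
    rewrite (Rmax_left 0 y), (Rmax_left 0 x).
    + rewrite Rminus_diag, Rabs_R0; lra.
    + lra.
    + apply Rabs_def2 in Hy. lra.
  - subst x. destruct (right_cont0 f f' HC eps Heps) as [d [Hd Hd']].
    exists (mkposreal d Hd). intros y Hy. unball Hy.
    rewrite (Rmax_left 0 0) by lra. apply Hd'.
    apply Rabs_def2 in Hy. split.
    + apply Rmax_l.
    + apply Rmax_lub_lt; lra.
  - destruct HC as [Hd _].
    assert (Hc : continuity_pt f x).
    { apply continuity_pt_filterlim. apply (ex_derive_continuous (K:=R_AbsRing) (V:=R_NormedModule)).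
      exists (f' x). apply Hd. exact Hx. }
    destruct (proj1 (continuity_pt_locally f x) Hc (mkposreal eps Heps)) as [[d Hd0] Hd'].
    assert (Hm : 0 < Rmin d x) by (apply Rmin_pos; lra).
    exists (mkposreal _ Hm). intros y Hy. unball Hy.
    apply Rabs_def2 in Hy.
    pose proof (Rmin_l d x); pose proof (Rmin_r d x).
    rewrite (Rmax_right 0 y), (Rmax_right 0 x) by lra.
    apply (Hd' y). apply ballR. simpl. apply Rabs_def1; lra.
Qed.

Lemma deriv_ext (f f' : R -> R) : C1_Rplus_with f f' ->
  forall x, 0 < x -> is_derive (fun t => f (Rmax 0 t)) x (f' x).
Proof.
  intros [Hd _] x Hx. apply is_derive_ext_loc with f; [|apply Hd; exact Hx].
  exists (mkposreal x Hx). intros y Hy. unball Hy. apply Rabs_def2 in Hy.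
  rewrite Rmax_right by lra. reflexivity.
Qed.

Lemma mono_gen (f f' : R -> R) (sg lo hi : R) : C1_Rplus_with f f' -> 0 <= lo ->
  (forall s, lo < s < hi -> 0 < sg * f' s) -> 0 < sg * sg ->
  forall a b, lo <= a -> a < b -> b <= hi -> 0 < sg * (f b - f a).
Proof.
  intros HC Hlo Hs Hsg a b Ha Hab Hb.
  set (df := fun x => if Rlt_dec a x then if Rlt_dec x b then f' x else sg else sg).
  destruct (MVT_gen (fun t => f (Rmax 0 t)) a b df) as [c [Hc Heq]].
  - rewrite Rmin_left, Rmax_right by lra. intros x Hx.
    unfold df. destruct (Rlt_dec a x); [|lra]. destruct (Rlt_dec x b); [|lra].
    apply deriv_ext; [exact HC | lra].
  - intros x _. apply (cont_ext f f' HC).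
  - rewrite Rmax_right in Heq by lra. rewrite (Rmax_right 0 a) in Heq by lra.
    rewrite Heq. rewrite Rmin_left, Rmax_right in Hc by lra.
    assert (0 < sg * df c).
    { unfold df. destruct (Rlt_dec a c); [|nra]. destruct (Rlt_dec c b); [|nra].
      apply Hs. lra. }
    nra.
Qed.

Lemma lim_pinf (f : R -> R) (l : R) : is_lim f p_infty (Finite l) ->
  forall eps, 0 < eps -> exists M, forall x, M < x -> Rabs (f x - l) < eps.
Proof.
  intros H eps He. apply is_lim_spec in H. exact (H (mkposreal eps He)).
Qed.

Lemma IVT_up (F : R -> R) a b c : (forall x, continuity_pt F x) -> a <= b ->
  F a <= c <= F b -> exists x, a <= x <= b /\ F x = c.
Proof.
  intros HF Hab Hc. destruct (IVT_gen F a b c HF) as [x [Hx Hfx]].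
  - rewrite Rmin_left, Rmax_right; lra.
  - exists x. rewrite Rmin_left, Rmax_right in Hx by lra. auto.
Qed.

Lemma IVT_down (F : R -> R) a b c : (forall x, continuity_pt F x) -> a <= b ->
  F b <= c <= F a -> exists x, a <= x <= b /\ F x = c.
Proof.
  intros HF Hab Hc. destruct (IVT_gen F a b c HF) as [x [Hx Hfx]].
  - rewrite Rmin_right, Rmax_left; lra.
  - exists x. rewrite Rmin_left, Rmax_right in Hx by lra. auto.
Qed.

Record mu1P (mu : R -> R) (m : R) : Prop := {
  m1_0 : mu 0 = 0;
  m1_inc : forall a b, 0 <= a -> a < b -> mu a < mu b;
  m1_lt : forall s, 0 <= s -> mu s < m;
  m1_root : forall c, 0 < c < m -> exists s, 0 <= s /\ mu s = c;
  m1_cont : forall x, continuity_pt (fun t => mu (Rmax 0 t)) x }.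

Lemma H1_facts mu m : H1 mu m -> mu1P mu m.
Proof.
  intros [mu' [HC [H0 [Hl Hpos]]]].
  assert (Hinc : forall a b, 0 <= a -> a < b -> mu a < mu b).
  { intros a b Ha Hab.
    pose proof (mono_gen mu mu' 1 0 (b+1) HC (Rle_refl 0)) as Hm.
    assert (0 < 1 * (mu b - mu a)); [|lra].
    apply Hm; try lra. intros s Hs. rewrite Rmult_1_l. apply Hpos; lra. }
  assert (Hlt : forall s, 0 <= s -> mu s < m).
  { intros s Hs. destruct (Rlt_le_dec (mu s) m) as [H|H]; [exact H|].
    assert (He : 0 < mu (s+1) - mu s) by (pose proof (Hinc s (s+1) Hs); lra).
    destruct (lim_pinf mu m Hl _ He) as [M HM].
    set (t := Rmax M (s+1) + 1).
    assert (Ht1 : M < t) by (unfold t; pose proof (Rmax_l M (s+1)); lra).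
    assert (Ht2 : s + 1 < t) by (unfold t; pose proof (Rmax_r M (s+1)); lra).
    specialize (HM t Ht1). pose proof (Hinc (s+1) t ltac:(lra) Ht2).
    apply Rabs_def2 in HM. lra. }
  constructor; auto.
  - intros c Hc. assert (He : 0 < m - c) by lra.
    destruct (lim_pinf mu m Hl _ He) as [M HM].
    set (t := Rmax M 0 + 1).
    assert (Ht1 : M < t) by (unfold t; pose proof (Rmax_l M 0); lra).
    assert (Ht2 : 0 < t) by (unfold t; pose proof (Rmax_r M 0); lra).
    specialize (HM t Ht1). apply Rabs_def2 in HM.
    destruct (IVT_up (fun t => mu (Rmax 0 t)) 0 t c (cont_ext _ _ HC)) as [x [Hx Hfx]].
    + lra.
    + rewrite !Rmax_right by lra. lra.
    + exists x. rewrite Rmax_right in Hfx by lra. split; [lra|exact Hfx].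
  - exact (cont_ext _ _ HC).
Qed.

Record mu2P (mu : R -> R) (Sm : R) : Prop := {
  m2_0 : mu 0 = 0;
  m2_Sm : 0 < Sm;
  m2_inc : forall a b, 0 <= a -> a < b -> b <= Sm -> mu a < mu b;
  m2_dec : forall a b, Sm <= a -> a < b -> mu b < mu a;
  m2_pos : forall s, 0 < s -> 0 < mu s;
  m2_max : forall s, 0 <= s -> mu s <= mu Sm;
  m2_root1 : forall c, 0 < c <= mu Sm -> exists s, 0 <= s <= Sm /\ mu s = c;
  m2_root2 : forall c, 0 < c <= mu Sm -> exists s, Sm <= s /\ mu s = c;
  m2_cont : forall x, continuity_pt (fun t => mu (Rmax 0 t)) x }.

Lemma H2_facts mu Sm : H2 mu Sm -> mu2P mu Sm.
Proof.
  intros [mu' [HC [H0 [Hl [HSm [Hp Hn]]]]]].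
  assert (Hinc : forall a b, 0 <= a -> a < b -> b <= Sm -> mu a < mu b).
  { intros a b Ha Hab Hb.
    pose proof (mono_gen mu mu' 1 0 Sm HC (Rle_refl 0)) as Hm.
    assert (0 < 1 * (mu b - mu a)); [|lra].
    apply Hm; try lra. intros s Hs. rewrite Rmult_1_l. apply Hp; lra. }
  assert (Hdec : forall a b, Sm <= a -> a < b -> mu b < mu a).
  { intros a b Ha Hab.
    pose proof (mono_gen mu mu' (-1) Sm (b+1) HC ltac:(lra)) as Hm.
    assert (0 < -1 * (mu b - mu a)); [|lra].
    apply Hm; try lra. intros s Hs. specialize (Hn s ltac:(lra)). lra. }
  assert (Hpos : forall s, 0 < s -> 0 < mu s).
  { intros s Hs. destruct (Rle_lt_dec s Sm) as [H|H].
    - rewrite <- H0. apply Hinc; lra.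
    - destruct (Rlt_le_dec 0 (mu s)) as [H'|H']; [exact H'|].
      assert (He : 0 < mu s - mu (s+1)) by (pose proof (Hdec s (s+1)); lra).
      destruct (lim_pinf mu 0 Hl _ He) as [M HM].
      set (t := Rmax M (s+1) + 1).
      assert (Ht1 : M < t) by (unfold t; pose proof (Rmax_l M (s+1)); lra).
      assert (Ht2 : s + 1 < t) by (unfold t; pose proof (Rmax_r M (s+1)); lra).
      specialize (HM t Ht1). pose proof (Hdec (s+1) t ltac:(lra) Ht2).
      apply Rabs_def2 in HM. lra. }
  assert (Hmax : forall s, 0 <= s -> mu s <= mu Sm).
  { intros s Hs. destruct (Rtotal_order s Sm) as [H|[H|H]].
    - left; apply Hinc; lra.
    - subst; lra.
    - left; apply Hdec; lra. }
  constructor; auto.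
  - intros c Hc.
    destruct (IVT_up (fun t => mu (Rmax 0 t)) 0 Sm c (cont_ext _ _ HC)) as [x [Hx Hfx]].
    + lra.
    + rewrite !Rmax_right by lra. lra.
    + exists x. rewrite Rmax_right in Hfx by lra. split; [lra|exact Hfx].
  - intros c Hc.
    destruct (lim_pinf mu 0 Hl c ltac:(lra)) as [M HM].
    set (t := Rmax M Sm + 1).
    assert (Ht1 : M < t) by (unfold t; pose proof (Rmax_l M Sm); lra).
    assert (Ht2 : Sm < t) by (unfold t; pose proof (Rmax_r M Sm); lra).
    specialize (HM t Ht1). apply Rabs_def2 in HM.
    destruct (IVT_down (fun t => mu (Rmax 0 t)) Sm t c (cont_ext _ _ HC)) as [x [Hx Hfx]].
    + lra.
    + rewrite !Rmax_right by lra. lra.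
    + exists x. rewrite Rmax_right in Hfx by lra. split; [lra|exact Hfx].
  - exact (cont_ext _ _ HC).
Qed.


Record hyps (p : sys) : Prop := {
  hD : 0 < D p; hr : 0 < r p < 1; ha : 0 < alpha p < 1;
  hk1 : 0 < k1 p; hk2 : 0 < k2 p; hk3 : 0 < k3 p;
  hs1 : 0 < S1in p; hs2 : 0 < S2in p;
  hmu1 : mu1P (mu1 p) (m1 p); hmu2 : mu2P (mu2 p) (S2m p) }.

Lemma ri_pos p i : hyps p -> 0 < ri p i.
Proof. intros P. pose proof (hr p P). destruct i; simpl; lra. Qed.

Lemma Di_pos p i : hyps p -> 0 < Di p i.
Proof. intros P. unfold Di. apply Rdiv_lt_0_compat; [apply (hD p P)|apply ri_pos; auto]. Qed.

Lemma aDi_pos p i : hyps p -> 0 < alpha p * Di p i.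
Proof. intros P. apply Rmult_lt_0_compat; [apply (ha p P)|apply Di_pos; auto]. Qed.

Lemma cond_equiv (d x y m : R) : 0 < x -> 0 < y ->
  (d < x * m / y <-> y * (d / x) < m) /\ (d <= x * m / y <-> y * (d / x) <= m).
Proof.
  intros Hx Hy.
  assert (E : forall u, y * (u / x) = (u * y / x)) by (intro; field; lra).
  assert (E2 : forall u, u < x * m / y <-> u * y / x < m).
  { intro u. split; intro H.
    - apply Rmult_lt_reg_r with (x / y). apply Rdiv_lt_0_compat; lra.
      replace (u * y / x * (x / y)) with u by (field; lra).
      replace (m * (x / y)) with (x * m / y) by (field; lra). exact H.
    - replace u with ((u * y / x) * (x / y)) by (field; lra).
      replace (x * m / y) with (m * (x / y)) by (field; lra).
      apply Rmult_lt_compat_r; [apply Rdiv_lt_0_compat; lra| exact H]. }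
  rewrite E. split; [apply E2|].
  split; intro H.
  - destruct H as [H|H]; [left; apply E2; exact H|right; rewrite H; field; lra].
  - destruct H as [H|H]; [left; apply E2; exact H|right; rewrite <- H; field; lra].
Qed.

Lemma lam1_spec p i : hyps p ->
  (lam1 p i = p_infty /\ forall S, 0 <= S -> mu1 p S <> alpha p * Di p i) \/
  (exists L, lam1 p i = Finite L /\ 0 < L /\ mu1 p L = alpha p * Di p i /\
     forall S, 0 <= S -> mu1 p S = alpha p * Di p i -> S = L).
Proof.
  intros P. pose proof (hmu1 p P) as M. pose proof (aDi_pos p i P) as Hc.
  pose proof (cond_equiv (D p) (ri p i) (alpha p) (m1 p) (ri_pos p i P) (proj1 (ha p P))) as [E _].
  unfold Di in *.
  unfold lam1. destruct (Rlt_dec (D p) (ri p i * m1 p / alpha p)) as [H|H].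
  - right. apply E in H.
    set (Q := fun S => 0 <= S /\ mu1 p S = alpha p * (D p / ri p i)).
    assert (HQ : Q (epsilon (inhabits 0) Q)).
    { apply epsilon_spec. destruct (m1_root _ _ M (alpha p * (D p / ri p i))) as [s Hs].
      - split; lra.
      - exists s; exact Hs. }
    destruct HQ as [H0 H1]. eexists; split; [reflexivity|]. split; [|split; [exact H1|]].
    + destruct H0 as [H0|H0]; [exact H0|]. rewrite <- H0, (m1_0 _ _ M) in H1. lra.
    + intros S HS HmS. set (L := epsilon (inhabits 0) Q) in *.
      destruct (Rtotal_order S L) as [h|[h|h]]; auto.
      * pose proof (m1_inc _ _ M S L HS h); lra.
      * pose proof (m1_inc _ _ M L S H0 h); lra.
  - left. split; [reflexivity|]. intros S HS HmS.
    apply H, E. rewrite <- HmS. apply (m1_lt _ _ M); exact HS.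
Qed.

Lemma lam2_spec p i : hyps p ->
  (lam2 p i I1 = p_infty /\ lam2 p i I2 = p_infty /\
     forall S, 0 <= S -> mu2 p S <> alpha p * Di p i) \/
  (exists L1 L2, lam2 p i I1 = Finite L1 /\ lam2 p i I2 = Finite L2 /\
     0 < L1 /\ 0 < L2 /\ mu2 p L1 = alpha p * Di p i /\ mu2 p L2 = alpha p * Di p i /\
     forall S, 0 <= S -> mu2 p S = alpha p * Di p i -> S = L1 \/ S = L2).
Proof.
  intros P. pose proof (hmu2 p P) as M. pose proof (aDi_pos p i P) as Hc.
  pose proof (cond_equiv (D p) (ri p i) (alpha p) (mu2 p (S2m p)) (ri_pos p i P) (proj1 (ha p P))) as [_ E].
  unfold Di in *. set (c := alpha p * (D p / ri p i)) in *.
  pose proof (m2_Sm _ _ M) as HSm.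
  unfold lam2. destruct (Rle_dec (D p) (ri p i * mu2 p (S2m p) / alpha p)) as [H|H].
  - right. apply E in H. fold c in H.
    set (Q1 := fun S => 0 <= S /\ mu2 p S = c /\ forall S', 0 <= S' -> mu2 p S' = c -> S <= S').
    set (Q2 := fun S => 0 <= S /\ mu2 p S = c /\ forall S', 0 <= S' -> mu2 p S' = c -> S' <= S).
    assert (HQ1 : Q1 (epsilon (inhabits 0) Q1)).
    { apply epsilon_spec. destruct (m2_root1 _ _ M c) as [s [Hs Hms]]; [lra|].
      exists s. split; [lra|split; [exact Hms|]]. intros S' HS' HmS'.
      destruct (Rle_lt_dec s S') as [h|h]; [exact h|].
      pose proof (m2_inc _ _ M S' s HS' h ltac:(lra)); lra. }
    assert (HQ2 : Q2 (epsilon (inhabits 0) Q2)).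
    { apply epsilon_spec. destruct (m2_root2 _ _ M c) as [s [Hs Hms]]; [lra|].
      exists s. split; [lra|split; [exact Hms|]]. intros S' HS' HmS'.
      destruct (Rle_lt_dec S' s) as [h|h]; [exact h|].
      pose proof (m2_dec _ _ M s S' Hs h); lra. }
    set (L1 := epsilon (inhabits 0) Q1) in *. set (L2 := epsilon (inhabits 0) Q2) in *.
    destruct HQ1 as [A1 [B1 C1]]. destruct HQ2 as [A2 [B2 C2]].
    assert (P1 : 0 < L1).
    { destruct A1 as [h|h]; [exact h|]. rewrite <- h, (m2_0 _ _ M) in B1. lra. }
    assert (P2 : 0 < L2).
    { destruct A2 as [h|h]; [exact h|]. rewrite <- h, (m2_0 _ _ M) in B2. lra. }
    exists L1, L2. do 6 (split; [first [reflexivity|assumption]|]).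
    intros S HS HmS. specialize (C1 S HS HmS). specialize (C2 S HS HmS).
    destruct (Rle_lt_dec S (S2m p)) as [h|h].
    + left. destruct C1 as [h'|h']; [|auto].
      pose proof (m2_inc _ _ M L1 S A1 h' h); lra.
    + right. destruct C2 as [h'|h']; [|auto].
      pose proof (m2_dec _ _ M S L2 ltac:(lra) h'); lra.
  - left. split; [reflexivity|split; [reflexivity|]]. intros S HS HmS.
    apply H, E. fold c. rewrite <- HmS. apply (m2_max _ _ M); exact HS.
Qed.

Lemma cont_h (F : R -> R) : (forall x, continuity_pt F x) ->
  forall u v c X x, continuity_pt (fun x => x * F (u - v * x) - c * (x - X)) x.
Proof.
  intros HF u v c X x.
  apply continuity_pt_minus.
  - apply continuity_pt_mult. apply continuity_pt_id.
    apply (continuity_pt_comp (fun x => u - v * x) F).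
    + apply continuity_pt_minus. apply continuity_pt_const; intros ? ?; reflexivity.
      apply continuity_pt_scal. apply continuity_pt_id.
    + apply HF.
  - apply continuity_pt_scal. apply continuity_pt_minus. apply continuity_pt_id.
    apply continuity_pt_const; intros ? ?; reflexivity.
Qed.

Lemma X12_spec p L : hyps p -> lam1 p I1 = Finite L -> 0 < L ->
  mu1 p L = alpha p * Di p I1 -> L < S1in p ->
  X11star p = (S1in p - L) / (alpha p * k1 p) /\ 0 < X11star p /\
  X11star p < X12star p /\ X12star p < S1in p / (alpha p * k1 p) /\
  f1 p (X12star p) = g1 p (X12star p) /\
  (forall x, X11star p < x < S1in p / (alpha p * k1 p) -> f1 p x = g1 p x -> x = X12star p).
Proof.
  intros P HL HL0 HmL HLs.
  pose proof (hmu1 p P) as M. pose proof (ha p P). pose proof (hk1 p P).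
  pose proof (aDi_pos p I1 P). pose proof (aDi_pos p I2 P) as Hc2.
  assert (HX : X11star p = (S1in p - L) / (alpha p * k1 p)) by (unfold X11star; rewrite HL; reflexivity).
  assert (Hak : 0 < alpha p * k1 p) by nra.
  set (X := X11star p) in *. set (E := S1in p / (alpha p * k1 p)).
  assert (HX0 : 0 < X) by (rewrite HX; apply Rdiv_lt_0_compat; lra).
  assert (HXE : X < E).
  { rewrite HX; unfold E. unfold Rdiv. apply Rmult_lt_compat_r; [apply Rinv_0_lt_compat|]; lra. }
  assert (HLX : S1in p - alpha p * k1 p * X = L) by (rewrite HX; field; lra).
  assert (HE0 : S1in p - alpha p * k1 p * E = 0) by (unfold E; field; lra).
  set (c2 := alpha p * Di p I2) in *.
  assert (Huniq : forall x y, X < x < E -> X < y < E -> f1 p x = g1 p x -> f1 p y = g1 p y -> x <= y -> x = y).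
  { intros x y Hx Hy Hfx Hfy [Hxy|Hxy]; [|exact Hxy]. exfalso.
    assert (f1 p y < f1 p x).
    { unfold f1. apply (m1_inc _ _ M).
      - assert (alpha p * k1 p * y < alpha p * k1 p * E) by (apply Rmult_lt_compat_l; lra). lra.
      - assert (alpha p * k1 p * x < alpha p * k1 p * y) by (apply Rmult_lt_compat_l; lra). lra. }
    assert (g1 p x < g1 p y).
    { unfold g1. fold c2. fold X.
      assert (Hd : c2 * (y - X) / y - c2 * (x - X) / x = c2 * X * (y - x) / (x * y)) by (field; lra).
      assert (0 < c2 * X * (y - x) / (x * y)).
      { apply Rdiv_lt_0_compat; [|nra]. apply Rmult_lt_0_compat; [nra|lra]. }
      lra. }
    lra. }
  set (Q := fun x => X < x < E /\ f1 p x = g1 p x).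
  assert (HQ : Q (X12star p)).
  { unfold X12star. fold X. fold E. fold Q. apply epsilon_spec.
    set (h := fun x => x * (fun t => mu1 p (Rmax 0 t)) (S1in p - alpha p * k1 p * x) - c2 * (x - X)).
    destruct (IVT_down h X E 0) as [x [Hx Hhx]].
    - intro x. apply cont_h. apply (m1_cont _ _ M).
    - lra.
    - unfold h. rewrite HE0, HLX, Rmax_right, Rmax_right by lra. rewrite (m1_0 _ _ M).
      split; [nra|]. rewrite HmL. nra.
    - assert (Hx1 : x <> X).
      { intro e. subst x. unfold h in Hhx. rewrite HLX, Rmax_right in Hhx by lra. rewrite HmL in Hhx. nra. }
      assert (Hx2 : x <> E).
      { intro e. subst x. unfold h in Hhx. rewrite HE0, Rmax_right in Hhx by lra.
        rewrite (m1_0 _ _ M) in Hhx. nra. }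
      exists x. split; [lra|]. unfold f1, g1. fold X c2.
      unfold h in Hhx. rewrite Rmax_right in Hhx.
      2: { assert (alpha p * k1 p * x <= alpha p * k1 p * E) by (apply Rmult_le_compat_l; lra). lra. }
      apply Rmult_eq_reg_l with x; [|lra]. field_simplify; [lra|lra]. }
  destruct HQ as [[Q1 Q2] Q3].
  split; [exact HX|]. split; [exact HX0|]. split; [exact Q1|]. split; [exact Q2|]. split; [exact Q3|].
  intros x Hx Hfx. destruct (Rle_lt_dec x (X12star p)) as [h|h].
  - apply Huniq; auto; lra.
  - symmetry. apply Huniq; auto; lra.
Qed.

Lemma sol2_ex p L' X11 X12 X21 : hyps p ->
  0 < L' - alpha p * k2 p * (X11 - X12) -> 0 < X21 ->
  exists x, sol2 p L' X11 X12 X21 x.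
Proof.
  intros P HA HX.
  pose proof (hmu2 p P) as M. pose proof (ha p P). pose proof (hk3 p P).
  pose proof (aDi_pos p I2 P) as Hc2.
  assert (Hak : 0 < alpha p * k3 p) by nra.
  set (A := L' - alpha p * k2 p * (X11 - X12)) in *.
  set (c2 := alpha p * Di p I2) in *.
  set (E := d2 p L' X11 X12 X21).
  assert (HE : E = X21 + A / (alpha p * k3 p)) by reflexivity.
  assert (HAE : 0 < A / (alpha p * k3 p)) by (apply Rdiv_lt_0_compat; lra).
  set (u := A + alpha p * k3 p * X21).
  assert (Harg : forall x, L' - alpha p * k2 p * (X11 - X12) + alpha p * k3 p * (X21 - x) = u - alpha p * k3 p * x)
    by (intro; unfold u, A; ring).
  assert (HuE : u - alpha p * k3 p * E = 0) by (rewrite HE; unfold u; field; lra).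
  assert (HuX : u - alpha p * k3 p * X21 = A) by (unfold u; ring).
  set (h := fun x => x * (fun t => mu2 p (Rmax 0 t)) (u - alpha p * k3 p * x) - c2 * (x - X21)).
  destruct (IVT_down h X21 E 0) as [x [Hx Hhx]].
  - intro x. apply cont_h. apply (m2_cont _ _ M).
  - lra.
  - unfold h. rewrite HuE, HuX, Rmax_right, Rmax_right by lra. rewrite (m2_0 _ _ M).
    pose proof (m2_pos _ _ M A HA). split; nra.
  - assert (Hx1 : x <> X21).
    { intro e. subst x. unfold h in Hhx. rewrite HuX, Rmax_right in Hhx by lra.
      pose proof (m2_pos _ _ M A HA). nra. }
    exists x. unfold sol2. split; [split; [lra|fold E; lra]|].
    unfold f2, g2. rewrite Harg. fold c2.
    unfold h in Hhx. rewrite Rmax_right in Hhx.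
    2: { assert (alpha p * k3 p * x <= alpha p * k3 p * E) by (apply Rmult_le_compat_l; lra). lra. }
    apply Rmult_eq_reg_l with x; [|lra]. field_simplify; [lra|lra].
Qed.

Set Bullet Behavior "Strict Subproofs".
Ltac fs := field; repeat split; intro; nra.
Ltac dbound x s Hs Hak :=
  match goal with |- x <= ?d =>
    let T := fresh in let T2 := fresh in
    assert (T : d - x = s / (alpha _ * k3 _)) by (rewrite Hs; fs);
    assert (T2 : 0 <= s / (alpha _ * k3 _)) by (unfold Rdiv; apply Rmult_le_pos; [lra| left; apply Rinv_0_lt_compat; exact Hak]);
    lra end.

Lemma mul_pos_eq0 a b : a * b = 0 -> 0 < a -> b = 0.
Proof. intros H Ha. destruct (Rmult_integral _ _ H); lra. Qed.

Lemma lin_solve c A x : 0 < c -> A - c * x = 0 -> x = A / c.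
Proof. intros Hc H. apply Rmult_eq_reg_l with c; [|lra]. field_simplify; lra. Qed.

Lemma prod0 a b : (a - b) * a = 0 \/ True -> True.
Proof. auto. Qed.

Lemma classify p : hyps p -> forall xi, steady p xi -> exists t, of_type p t xi.
Proof.
  intros P [s11 x11 s21 x21 s12 x12 s22 x22] Hs.
  unfold steady in Hs; simpl in Hs.
  destruct Hs as [[N1 [N2 [N3 [N4 [N5 [N6 [N7 N8]]]]]]] [E1 [E2 [E3 [E4 [E5 [E6 [E7 E8]]]]]]]].
  pose proof (Di_pos p I1 P) as HD1. pose proof (Di_pos p I2 P) as HD2.
  pose proof (ha p P) as Ha. pose proof (hk1 p P). pose proof (hk2 p P). pose proof (hk3 p P).
  pose proof (hs1 p P). pose proof (hs2 p P).
  pose proof (hmu1 p P) as M1. pose proof (hmu2 p P) as M2.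
  pose proof (aDi_pos p I1 P) as HaD1. pose proof (aDi_pos p I2 P) as HaD2.
  assert (Hak1 : 0 < alpha p * k1 p) by nra.
  assert (Hak3 : 0 < alpha p * k3 p) by nra.
  assert (Hak2 : 0 < alpha p * k2 p) by nra.
  assert (Hmu1nn : forall s, 0 <= s -> 0 <= mu1 p s).
  { intros s [hs|hs]; [left; rewrite <- (m1_0 _ _ M1); apply (m1_inc _ _ M1); lra|subst; rewrite (m1_0 _ _ M1); lra]. }
  assert (Hmu2nn : forall s, 0 <= s -> 0 <= mu2 p s).
  { intros s [hs|hs]; [left; apply (m2_pos _ _ M2); lra|subst; rewrite (m2_0 _ _ M2); lra]. }
  destruct N2 as [Px11|Hx11].
  2:{
    subst x11.
    assert (Hs11 : s11 = S1in p).
    { assert (T : Di p I1 * (S1in p - s11) = 0) by (rewrite <- E1; ring). apply mul_pos_eq0 in T; [lra|exact HD1]. }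
    subst s11.
    assert (Hmu1s1 : True) by trivial.
    destruct N4 as [Px21|Px21].
    -
      assert (Hm21 : mu2 p s21 = alpha p * Di p I1).
      { destruct (Rmult_integral _ _ E4); lra. }
      destruct (lam2_spec p I1 P) as [[_ [_ Hn]]|[La [Lb [HLa [HLb [HLap [HLbp [HLam [HLbm HLu]]]]]]]]];
        [exfalso; apply (Hn s21 N3 Hm21)|].
      assert (Hx21 : x21 = (S2in p - s21) / (alpha p * k3 p)).
      { apply lin_solve; [exact Hak3|].
        assert (T : Di p I1 * (S2in p - s21 - alpha p * k3 p * x21) = 0)
          by (rewrite <- E3; rewrite Hm21; ring).
        apply mul_pos_eq0 in T; [lra|exact HD1]. }
      assert (Px22 : 0 < x22).
      { destruct N8 as [h|h]; [exact h|]. subst x22. exfalso.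
        assert (T : alpha p * Di p I2 * x21 = 0) by (rewrite <- E8; ring). nra. }
      assert (E8' : mu2 p s22 * x22 = alpha p * Di p I2 * (x22 - x21)) by lra.
      assert (Hmu22 : mu2 p s22 = alpha p * Di p I2 * (x22 - x21) / x22)
        by (apply Rmult_eq_reg_r with x22; [rewrite E8'; field; apply Rgt_not_eq; exact Px22|apply Rgt_not_eq; exact Px22]).
      destruct N6 as [Px12|Px12].
      +
        assert (Hm12 : mu1 p s12 = alpha p * Di p I2).
        { assert (T : x12 * (mu1 p s12 - alpha p * Di p I2) = 0) by (rewrite <- E6; ring).
          destruct (Rmult_integral _ _ T); lra. }
        destruct (lam1_spec p I2 P) as [[_ Hn]|[L [HL [HLp [HLm HLu1]]]]];
          [exfalso; apply (Hn s12 N5 Hm12)|].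
        pose proof (HLu1 s12 N5 Hm12) as Hs12. subst s12.
        assert (Hx12 : x12 = (S1in p - L) / (alpha p * k1 p)).
        { apply lin_solve; [exact Hak1|].
          assert (T : Di p I2 * (S1in p - L - alpha p * k1 p * x12) = 0)
            by (rewrite <- E5; rewrite Hm12; ring).
          apply mul_pos_eq0 in T; [lra|exact HD2]. }
        assert (Hs22 : s22 = s21 + alpha p * k2 p * x12 - alpha p * k3 p * (x22 - x21)).
        { assert (T : Di p I2 * (s21 + alpha p * k2 p * x12 - alpha p * k3 p * (x22 - x21) - s22) = 0).
          { rewrite <- E7. rewrite Hm12. replace (k3 p * mu2 p s22 * x22) with (k3 p * (mu2 p s22 * x22)) by ring.
            rewrite E8'. ring. }
          apply mul_pos_eq0 in T; [lra|exact HD2]. }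
        destruct (HLu s21 N3 Hm21) as [Hj|Hj]; subst s21;
          [exists (E0_11 I1); unfold of_type; rewrite HL, HLa|exists (E0_11 I2); unfold of_type; rewrite HL, HLb];
          simpl; (split; [reflexivity|]); (split; [reflexivity|]); exists x22;
          (split; [unfold sol2, d2, f2, g2; split; [split; [lra|]|]|split; [f_equal|lra]]).
        all: try (rewrite <- Hx21); try (rewrite <- Hx12); try reflexivity.
        all: try (dbound x22 s22 Hs22 Hak3).
        all: try (rewrite Hs22, Hx21, Hx12; fs).
        all: try (rewrite <- Hmu22; f_equal; rewrite Hs22; ring).
      +
        subst x12.
        assert (Hs12 : s12 = S1in p).
        { assert (T : Di p I2 * (S1in p - s12) = 0) by (rewrite <- E5; ring).
          apply mul_pos_eq0 in T; [lra|exact HD2]. }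
        subst s12.
        assert (Hs22 : s22 = s21 - alpha p * k3 p * (x22 - x21)).
        { assert (T : Di p I2 * (s21 - alpha p * k3 p * (x22 - x21) - s22) = 0).
          { rewrite <- E7. replace (k3 p * mu2 p s22 * x22) with (k3 p * (mu2 p s22 * x22)) by ring.
            rewrite E8'. ring. }
          apply mul_pos_eq0 in T; [lra|exact HD2]. }
        destruct (HLu s21 N3 Hm21) as [Hj|Hj]; subst s21;
          [exists (E0_01 I1); unfold of_type; rewrite HLa|exists (E0_01 I2); unfold of_type; rewrite HLb];
          simpl; (split; [reflexivity|]); exists x22;
          (split; [unfold sol2, d2, f2, g2; split; [split; [lra|]|]|split; [f_equal|lra]]).
        all: try (rewrite <- Hx21); try reflexivity.
        all: try (dbound x22 s22 Hs22 Hak3).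
        all: try (rewrite Hs22, Hx21; fs).
        all: try (rewrite <- Hmu22; f_equal; rewrite Hs22; ring).
    -
      subst x21.
      assert (Hs21 : s21 = S2in p).
      { assert (T : Di p I1 * (S2in p - s21) = 0) by (rewrite <- E3; ring).
        apply mul_pos_eq0 in T; [lra|exact HD1]. }
      subst s21.
      destruct N6 as [Px12|Px12].
      +
        assert (Hm12 : mu1 p s12 = alpha p * Di p I2).
        { assert (T : x12 * (mu1 p s12 - alpha p * Di p I2) = 0) by (rewrite <- E6; ring).
          destruct (Rmult_integral _ _ T); lra. }
        destruct (lam1_spec p I2 P) as [[_ Hn]|[L [HL [HLp [HLm HLu1]]]]];
          [exfalso; apply (Hn s12 N5 Hm12)|].
        pose proof (HLu1 s12 N5 Hm12) as Hs12. subst s12.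
        assert (Hx12 : x12 = (S1in p - L) / (alpha p * k1 p)).
        { apply lin_solve; [exact Hak1|].
          assert (T : Di p I2 * (S1in p - L - alpha p * k1 p * x12) = 0)
            by (rewrite <- E5; rewrite Hm12; ring).
          apply mul_pos_eq0 in T; [lra|exact HD2]. }
        destruct N8 as [Px22|Px22].
        * assert (Hm22 : mu2 p s22 = alpha p * Di p I2).
          { assert (T : x22 * (mu2 p s22 - alpha p * Di p I2) = 0) by (rewrite <- E8; ring).
            destruct (Rmult_integral _ _ T); lra. }
          assert (Hx22 : x22 = (S2in p - s22 + alpha p * k2 p * x12) / (alpha p * k3 p)).
          { apply lin_solve; [exact Hak3|].
            assert (T : Di p I2 * (S2in p - s22 + alpha p * k2 p * x12 - alpha p * k3 p * x22) = 0)
              by (rewrite <- E7; rewrite Hm12, Hm22; ring).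
            apply mul_pos_eq0 in T; [lra|exact HD2]. }
          destruct (lam2_spec p I2 P) as [[_ [_ Hn]]|[La [Lb [HLa [HLb [HLap [HLbp [HLam [HLbm HLu]]]]]]]]];
            [exfalso; apply (Hn s22 N7 Hm22)|].
          destruct (HLu s22 N7 Hm22) as [Hj|Hj]; subst s22;
            [exists (E00_1 I1); unfold of_type, Fij; rewrite HL, HLa|exists (E00_1 I2); unfold of_type, Fij; rewrite HL, HLb];
            simpl; (split; [reflexivity|]); (split; [reflexivity|]);
            (split; [f_equal|split; lra]).
          all: try (rewrite Hx22, Hx12; fs).
          all: try exact Hx12.
        * subst x22.
          assert (Hs22 : s22 = S2in p + alpha p * k2 p * x12).
          { assert (T : Di p I2 * (S2in p + alpha p * k2 p * x12 - s22) = 0)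
              by (rewrite <- E7; rewrite Hm12; ring).
            apply mul_pos_eq0 in T; [lra|exact HD2]. }
          exists E00_10. unfold of_type. rewrite HL. simpl.
          split; [reflexivity|]. split; [f_equal|lra].
          all: try exact Hx12.
          rewrite Hs22, Hx12; fs.
      +
        subst x12.
        assert (Hs12 : s12 = S1in p).
        { assert (T : Di p I2 * (S1in p - s12) = 0) by (rewrite <- E5; ring).
          apply mul_pos_eq0 in T; [lra|exact HD2]. }
        subst s12.
        destruct N8 as [Px22|Px22].
        * assert (Hm22 : mu2 p s22 = alpha p * Di p I2).
          { assert (T : x22 * (mu2 p s22 - alpha p * Di p I2) = 0) by (rewrite <- E8; ring).
            destruct (Rmult_integral _ _ T); lra. }
          assert (Hx22 : x22 = (S2in p - s22) / (alpha p * k3 p)).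
          { apply lin_solve; [exact Hak3|].
            assert (T : Di p I2 * (S2in p - s22 - alpha p * k3 p * x22) = 0)
              by (rewrite <- E7; rewrite Hm22; ring).
            apply mul_pos_eq0 in T; [lra|exact HD2]. }
          destruct (lam2_spec p I2 P) as [[_ [_ Hn]]|[La [Lb [HLa [HLb [HLap [HLbp [HLam [HLbm HLu]]]]]]]]];
            [exfalso; apply (Hn s22 N7 Hm22)|].
          destruct (HLu s22 N7 Hm22) as [Hj|Hj]; subst s22;
            [exists (E00_0 I1); unfold of_type; rewrite HLa|exists (E00_0 I2); unfold of_type; rewrite HLb];
            simpl; (split; [reflexivity|]); (split; [f_equal; exact Hx22|lra]).
        * subst x22.
          assert (Hs22 : s22 = S2in p).
          { assert (T : Di p I2 * (S2in p - s22) = 0) by (rewrite <- E7; ring).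
            apply mul_pos_eq0 in T; [lra|exact HD2]. }
          subst s22. exists E00_00. reflexivity. }
  assert (Hm11 : mu1 p s11 = alpha p * Di p I1) by (destruct (Rmult_integral _ _ E2); lra).
  destruct (lam1_spec p I1 P) as [[_ Hn]|[L [HL [HLp [HLm HLu1]]]]];
    [exfalso; apply (Hn s11 N1 Hm11)|].
  pose proof (HLu1 s11 N1 Hm11) as Hs11. subst s11.
  assert (Hx11 : x11 = (S1in p - L) / (alpha p * k1 p)).
  { apply lin_solve; [exact Hak1|].
    assert (T : Di p I1 * (S1in p - L - alpha p * k1 p * x11) = 0)
      by (rewrite <- E1; rewrite Hm11; ring).
    apply mul_pos_eq0 in T; [lra|exact HD1]. }
  assert (HLs : L < S1in p).
  { assert (T : S1in p - L = alpha p * k1 p * x11) by (rewrite Hx11; fs). nra. }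
  destruct (X12_spec p L P HL HLp HLm HLs) as [HX [HX0 [HXa [HXb [HXf HXu]]]]].
  assert (HxX : x11 = X11star p) by (rewrite HX; exact Hx11).
  assert (Px12 : 0 < x12).
  { destruct N6 as [h|h]; [exact h|]. subst x12. exfalso.
    assert (T : alpha p * Di p I2 * x11 = 0) by (rewrite <- E6; ring). nra. }
  assert (E6' : mu1 p s12 * x12 = alpha p * Di p I2 * (x12 - x11)) by lra.
  assert (Hs12 : s12 = S1in p - alpha p * k1 p * x12).
  { assert (T : Di p I2 * (L - alpha p * k1 p * (x12 - x11) - s12) = 0).
    { rewrite <- E5. replace (k1 p * mu1 p s12 * x12) with (k1 p * (mu1 p s12 * x12)) by ring.
      rewrite E6'. ring. }
    apply mul_pos_eq0 in T; [|exact HD2].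
    assert (T2 : alpha p * k1 p * x11 = S1in p - L) by (rewrite Hx11; fs). nra. }
  assert (Ps12 : 0 < s12).
  { destruct N5 as [h|h]; [exact h|]. exfalso. rewrite <- h, (m1_0 _ _ M1) in E6'.
    assert (x12 = x11) by nra. subst x12.
    assert (T2 : alpha p * k1 p * x11 = S1in p - L) by (rewrite Hx11; fs). nra. }
  assert (Hmu12 : mu1 p s12 = alpha p * Di p I2 * (x12 - x11) / x12)
    by (apply Rmult_eq_reg_r with x12; [rewrite E6'; field; apply Rgt_not_eq; exact Px12|apply Rgt_not_eq; exact Px12]).
  assert (Hx12s : x12 = X12star p).
  { apply HXu.
    - split.
      + pose proof (m1_inc _ _ M1 0 s12 (Rle_refl 0) Ps12) as Hq. rewrite (m1_0 _ _ M1) in Hq.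
        rewrite <- HxX. nra.
      + apply Rmult_lt_reg_l with (alpha p * k1 p); [exact Hak1|].
        replace (alpha p * k1 p * (S1in p / (alpha p * k1 p))) with (S1in p) by fs. lra.
    - unfold f1, g1. rewrite <- Hs12, Hmu12, <- HxX. reflexivity. }
  subst x12.
  destruct N4 as [Px21|Px21].
  -
    assert (Hm21 : mu2 p s21 = alpha p * Di p I1).
    { destruct (Rmult_integral _ _ E4); lra. }
    destruct (lam2_spec p I1 P) as [[_ [_ Hn]]|[La [Lb [HLa [HLb [HLap [HLbp [HLam [HLbm HLu]]]]]]]]];
      [exfalso; apply (Hn s21 N3 Hm21)|].
    assert (Hx21 : x21 = (S2in p - s21 + alpha p * k2 p * x11) / (alpha p * k3 p)).
    { apply lin_solve; [exact Hak3|].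
      assert (T : Di p I1 * (S2in p - s21 + alpha p * k2 p * x11 - alpha p * k3 p * x21) = 0)
        by (rewrite <- E3; rewrite Hm21, Hm11; ring).
      apply mul_pos_eq0 in T; [lra|exact HD1]. }
    assert (Px22 : 0 < x22).
    { destruct N8 as [h|h]; [exact h|]. subst x22. exfalso.
      assert (T : alpha p * Di p I2 * x21 = 0) by (rewrite <- E8; ring). nra. }
    assert (E8' : mu2 p s22 * x22 = alpha p * Di p I2 * (x22 - x21)) by lra.
    assert (Hmu22 : mu2 p s22 = alpha p * Di p I2 * (x22 - x21) / x22)
      by (apply Rmult_eq_reg_r with x22; [rewrite E8'; field; apply Rgt_not_eq; exact Px22|apply Rgt_not_eq; exact Px22]).
    assert (Hs22 : s22 = s21 + alpha p * k2 p * (X12star p - x11) - alpha p * k3 p * (x22 - x21)).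
    { assert (T : Di p I2 * (s21 + alpha p * k2 p * (X12star p - x11) - alpha p * k3 p * (x22 - x21) - s22) = 0).
      { rewrite <- E7. replace (k3 p * mu2 p s22 * x22) with (k3 p * (mu2 p s22 * x22)) by ring.
        replace (k2 p * mu1 p s12 * X12star p) with (k2 p * (mu1 p s12 * X12star p)) by ring.
        rewrite E8', E6'. ring. }
      apply mul_pos_eq0 in T; [lra|exact HD2]. }
    assert (Hx21' : x21 = k2 p * (S1in p - (L + k1 p / k2 p * (s21 + - S2in p))) / (alpha p * k1 p * k3 p))
      by (rewrite Hx21, Hx11; fs).
    destruct (HLu s21 N3 Hm21) as [Hj|Hj]; subst s21;
      [exists (E1_11 I1); unfold of_type, Fij; rewrite HL, HLa|exists (E1_11 I2); unfold of_type, Fij; rewrite HL, HLb];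
      simpl; (split; [reflexivity|]); (split; [reflexivity|]); exists x22;
      (split; [unfold sol2, d2, f2, g2; split; [split; [lra|]|]|split; [f_equal|lra]]).
    all: try (rewrite <- Hx11); try (rewrite <- Hx21'); try reflexivity; try (rewrite Hs12; reflexivity).
    all: try (dbound x22 s22 Hs22 Hak3).
    all: try (rewrite Hx21; fs).
    all: try (rewrite Hs22, Hx21; fs).
    all: try (rewrite <- Hmu22; f_equal; rewrite Hs22; ring).
  -
    subst x21.
    assert (Hs21 : s21 = S2in p + alpha p * k2 p * x11).
    { assert (T : Di p I1 * (S2in p + alpha p * k2 p * x11 - s21) = 0)
        by (rewrite <- E3; rewrite Hm11; ring).
      apply mul_pos_eq0 in T; [lra|exact HD1]. }
    assert (Hs21' : s21 = S2in p + k2 p / k1 p * (S1in p - L)) by (rewrite Hs21, Hx11; fs).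
    destruct N8 as [Px22|Px22].
    + assert (Hm22 : mu2 p s22 = alpha p * Di p I2).
      { assert (T : x22 * (mu2 p s22 - alpha p * Di p I2) = 0) by (rewrite <- E8; ring).
        destruct (Rmult_integral _ _ T); lra. }
      assert (Hx22 : x22 = (S2in p + alpha p * k2 p * X12star p + - s22) / (alpha p * k3 p)).
      { apply lin_solve; [exact Hak3|].
        assert (T : Di p I2 * (S2in p + alpha p * k2 p * X12star p + - s22 - alpha p * k3 p * x22) = 0).
        { rewrite <- E7. rewrite Hm22.
          replace (k2 p * mu1 p s12 * X12star p) with (k2 p * (mu1 p s12 * X12star p)) by ring.
          rewrite E6', Hs21. ring. }
        apply mul_pos_eq0 in T; [lra|exact HD2]. }
      destruct (lam2_spec p I2 P) as [[_ [_ Hn]]|[La [Lb [HLa [HLb [HLap [HLbp [HLam [HLbm HLu]]]]]]]]];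
        [exfalso; apply (Hn s22 N7 Hm22)|].
      destruct (HLu s22 N7 Hm22) as [Hj|Hj]; subst s22;
        [exists (E10_1 I1); unfold of_type, phi; rewrite HL, HLa|exists (E10_1 I2); unfold of_type, phi; rewrite HL, HLb];
        simpl; (split; [reflexivity|]); (split; [reflexivity|]);
        (split; [f_equal|split; [lra|split; lra]]).
      all: try exact HxX; try exact Hs21'; try exact Hs12; try exact Hx22.
    + subst x22.
      assert (Hs22 : s22 = S2in p + alpha p * k2 p * X12star p).
      { assert (T : Di p I2 * (S2in p + alpha p * k2 p * X12star p - s22) = 0).
        { rewrite <- E7.
          replace (k2 p * mu1 p s12 * X12star p) with (k2 p * (mu1 p s12 * X12star p)) by ring.
          rewrite E6', Hs21. ring. }
        apply mul_pos_eq0 in T; [lra|exact HD2]. }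
      exists E10_10. unfold of_type. rewrite HL. simpl.
      split; [reflexivity|]. split; [f_equal|split; lra].
      all: try exact HxX; try exact Hs21'; try exact Hs12; try exact Hs22.
Qed.


Lemma Fpinf a L s : 0 < a ->
  Rbar_plus (Finite L) (Rbar_mult (Finite a) (Rbar_minus p_infty (Finite s))) = p_infty.
Proof.
  intros Ha. unfold Rbar_minus, Rbar_plus, Rbar_mult. simpl.
  destruct (Rle_dec 0 a) as [h|h]; [destruct (Rle_lt_or_eq_dec 0 a h)|]; simpl; try reflexivity; lra.
Qed.

Lemma lam1_one p i : hyps p -> lam1 p i = p_infty \/
  exists L, lam1 p i = Finite L /\ 0 < L /\ mu1 p L = alpha p * Di p i.
Proof.
  intros P. destruct (lam1_spec p i P) as [[H _]|[L [H1 [H2 [H3 _]]]]]; [left; exact H|right; eauto].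
Qed.

Lemma lam2_one p i j : hyps p -> lam2 p i j = p_infty \/
  exists L, lam2 p i j = Finite L /\ 0 < L /\ mu2 p L = alpha p * Di p i.
Proof.
  intros P. destruct (lam2_spec p i P) as [[H [H' _]]|[L1 [L2 [H1 [H2 [H3 [H4 [H5 [H6 _]]]]]]]]].
  - left; destruct j; assumption.
  - right; destruct j; eauto.
Qed.

Lemma pos_div_inv A c : 0 < c -> 0 < A / c -> 0 < A.
Proof.
  intros Hc H. replace A with (A / c * c) by (field; lra). apply Rmult_lt_0_compat; lra.
Qed.

Lemma div_pos A c : 0 < c -> 0 < A -> 0 < A / c.
Proof. intros. apply Rdiv_lt_0_compat; lra. Qed.


Lemma exist_iff p : hyps p -> forall t,
  (exists xi, steady p xi /\ of_type p t xi) <-> cond p t.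
Proof.
  intros P t.
  pose proof (Di_pos p I1 P) as HD1. pose proof (Di_pos p I2 P) as HD2.
  pose proof (aDi_pos p I1 P) as HaD1. pose proof (aDi_pos p I2 P) as HaD2.
  pose proof (ha p P) as Ha. pose proof (hk1 p P). pose proof (hk2 p P). pose proof (hk3 p P).
  pose proof (hs1 p P). pose proof (hs2 p P).
  pose proof (hmu1 p P) as M1. pose proof (hmu2 p P) as M2.
  assert (Hak1 : 0 < alpha p * k1 p) by nra.
  assert (Hak3 : 0 < alpha p * k3 p) by nra.
  assert (Hak2 : 0 < alpha p * k2 p) by nra.
  assert (Hk12 : 0 < k1 p / k2 p) by (apply Rdiv_lt_0_compat; lra).
  split.
  - intros [xi [_ Ht]].
    destruct t; unfold of_type, cond, Fij, phi, X11star in *.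
    all: repeat match type of Ht with
      | context [lam1 ?p ?i] => revert Ht; destruct (lam1 p i) as [?| |]; intro Ht
      | context [lam2 ?p ?i ?j] => revert Ht; destruct (lam2 p i j) as [?| |]; intro Ht end.
    all: simpl in Ht |- *.
    all: try (destruct Ht as [Hf Ht]; discriminate Hf).
    all: try (destruct Ht as [Hf1 [Hf Ht]]; discriminate Hf).
    all: try exact I.
    all: repeat match type of Ht with is_finite _ /\ _ => destruct Ht as [_ Ht] end.
    all: try (match type of Ht with ex _ => destruct Ht as [x [_ Ht]] end).
    all: destruct Ht as [-> Hp]; simpl in Hp.
    all: repeat match goal with H : _ /\ _ |- _ => destruct H end.
    all: repeat match goal with H : 0 < _ / _ |- _ => apply pos_div_inv in H; [|nra] end.
    all: try split; nra.
  - intro Hc. assert (Hk21 : 0 < k2 p / k1 p) by (apply Rdiv_lt_0_compat; lra).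
    destruct t; unfold cond in Hc.
    +
      exists (mkState (S1in p) 0 (S2in p) 0 (S1in p) 0 (S2in p) 0). split; [|reflexivity].
      unfold steady; simpl. repeat split; try lra; ring.
    +
      destruct (lam2_one p I2 i P) as [E|[L [E [HLp HLm]]]]; rewrite E in Hc; simpl in Hc; [contradiction|].
      exists (mkState (S1in p) 0 (S2in p) 0 (S1in p) 0 L ((S2in p - L) / (alpha p * k3 p))).
      split.
      * unfold steady; simpl. rewrite HLm.
        repeat split; try lra; try (left; apply div_pos; lra); fs.
      * unfold of_type; rewrite E; simpl. split; [reflexivity|split; [reflexivity|apply div_pos; lra]].
    +
      destruct (lam1_one p I2 P) as [E|[L [E [HLp HLm]]]]; rewrite E in Hc; simpl in Hc; [contradiction|].
      exists (mkState (S1in p) 0 (S2in p) 0 L ((S1in p - L) / (alpha p * k1 p))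
                   (S2in p + k2 p / k1 p * (S1in p - L)) 0).
      split.
      * unfold steady; simpl. rewrite HLm.
        repeat split; try lra; try (left; apply div_pos; lra); try nra; fs.
      * unfold of_type; rewrite E; simpl. split; [reflexivity|split; [reflexivity|apply div_pos; lra]].
    +
      unfold Fij in Hc. destruct Hc as [Hc1 Hc2].
      destruct (lam1_one p I2 P) as [E|[L [E [HLp HLm]]]]; rewrite E in Hc1, Hc2; simpl in Hc1; [contradiction|].
      destruct (lam2_one p I2 i P) as [E'|[L' [E' [HLp' HLm']]]]; rewrite E' in Hc2.
      { rewrite Fpinf in Hc2 by exact Hk12. simpl in Hc2. contradiction. }
      simpl in Hc2.
      assert (HX22 : 0 < k2 p * (S1in p - (L + k1 p / k2 p * (L' + - S2in p))) / (alpha p * k1 p * k3 p)).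
      { apply div_pos; [nra|]. apply Rmult_lt_0_compat; lra. }
      exists (mkState (S1in p) 0 (S2in p) 0 L ((S1in p - L) / (alpha p * k1 p))
                   L' (k2 p * (S1in p - (L + k1 p / k2 p * (L' + - S2in p))) / (alpha p * k1 p * k3 p))).
      split.
      * unfold steady; simpl. rewrite HLm, HLm'.
        repeat split; try lra; try (left; apply div_pos; lra); fs.
      * unfold of_type, Fij; rewrite E, E'; simpl.
        split; [reflexivity|split; [reflexivity|split; [reflexivity|split; [apply div_pos; lra|exact HX22]]]].
    +
      destruct (lam1_one p I1 P) as [E|[L [E [HLp HLm]]]]; rewrite E in Hc; simpl in Hc; [contradiction|].
      destruct (X12_spec p L P E HLp HLm Hc) as [HX [HX0 [HXa [HXb [HXf _]]]]].
      unfold f1, g1 in HXf.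
      assert (HS12 : 0 < S1in p - alpha p * k1 p * X12star p).
      { assert (Hq : alpha p * k1 p * X12star p < alpha p * k1 p * (S1in p / (alpha p * k1 p))) by (apply Rmult_lt_compat_l; lra).
        replace (alpha p * k1 p * (S1in p / (alpha p * k1 p))) with (S1in p) in Hq by fs. lra. }
      exists (mkState L (X11star p) (S2in p + k2 p / k1 p * (S1in p - L)) 0
                   (S1in p - alpha p * k1 p * X12star p) (X12star p) (S2in p + alpha p * k2 p * X12star p) 0).
      split.
      * unfold steady; simpl. rewrite HLm, HXf, HX.
        repeat split; try lra; try (left; apply div_pos; lra); try nra; fs.
      * unfold of_type; rewrite E; simpl. split; [reflexivity|split; [reflexivity|split; lra]].
    +
      unfold phi in Hc. destruct Hc as [Hc1 Hc2].
      destruct (lam1_one p I1 P) as [E|[L [E [HLp HLm]]]]; rewrite E in Hc1; simpl in Hc1; [contradiction|].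
      destruct (lam2_one p I2 i P) as [E'|[L' [E' [HLp' HLm']]]]; rewrite E' in Hc2; simpl in Hc2; [contradiction|].
      destruct (X12_spec p L P E HLp HLm Hc1) as [HX [HX0 [HXa [HXb [HXf _]]]]].
      unfold f1, g1 in HXf.
      assert (HS12 : 0 < S1in p - alpha p * k1 p * X12star p).
      { assert (Hq : alpha p * k1 p * X12star p < alpha p * k1 p * (S1in p / (alpha p * k1 p))) by (apply Rmult_lt_compat_l; lra).
        replace (alpha p * k1 p * (S1in p / (alpha p * k1 p))) with (S1in p) in Hq by fs. lra. }
      exists (mkState L (X11star p) (S2in p + k2 p / k1 p * (S1in p - L)) 0
                   (S1in p - alpha p * k1 p * X12star p) (X12star p) L'
                   ((S2in p + alpha p * k2 p * X12star p + - L') / (alpha p * k3 p))).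
      split.
      * unfold steady; simpl. rewrite HLm, HLm', HXf, HX.
        repeat split; try lra; try (left; apply div_pos; lra); try nra; fs.
      * unfold of_type, phi; rewrite E, E'; simpl.
        split; [reflexivity|split; [reflexivity|split; [reflexivity|split; [lra|split; [lra|apply div_pos; lra]]]]].
    +
      destruct (lam2_one p I1 i P) as [E|[L' [E [HLp HLm]]]]; rewrite E in Hc; simpl in Hc; [contradiction|].
      set (x21 := (S2in p - L') / (alpha p * k3 p)).
      assert (Hx21 : 0 < x21) by (apply div_pos; lra).
      destruct (sol2_ex p L' 0 0 x21 P) as [x [[Hx0 Hxd] Hf]]; [nra|exact Hx21|].
      unfold d2 in Hxd. unfold f2, g2 in Hf.
      replace (L' - alpha p * k2 p * (0 - 0) + alpha p * k3 p * (x21 - x)) with (S2in p - alpha p * k3 p * x) in Hf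
        by (unfold x21; fs).
      assert (HS22 : 0 <= S2in p - alpha p * k3 p * x).
      { assert (Hq : alpha p * k3 p * x <= alpha p * k3 p * (x21 + (L' - alpha p * k2 p * (0 - 0)) / (alpha p * k3 p)))
          by (apply Rmult_le_compat_l; lra).
        replace (alpha p * k3 p * (x21 + (L' - alpha p * k2 p * (0 - 0)) / (alpha p * k3 p))) with (S2in p) in Hq
          by (unfold x21; fs). lra. }
      exists (mkState (S1in p) 0 L' x21 (S1in p) 0 (S2in p - alpha p * k3 p * x) x).
      split.
      * unfold steady; simpl. rewrite HLm, Hf.
        repeat split; try lra; unfold x21; fs.
      * unfold of_type; rewrite E; simpl; fold x21. split; [reflexivity|]. exists x.
        split; [split; [unfold d2; split; lra|]|split; [reflexivity|split; lra]].
        unfold f2, g2. fold x21.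
        replace (L' - alpha p * k2 p * (0 - 0) + alpha p * k3 p * (x21 - x)) with (S2in p - alpha p * k3 p * x)
          by (unfold x21; fs). exact Hf.
    +
      destruct Hc as [Hc1 Hc2].
      destruct (lam1_one p I2 P) as [E|[L [E [HLp HLm]]]]; rewrite E in Hc1; simpl in Hc1; [contradiction|].
      destruct (lam2_one p I1 i P) as [E'|[L' [E' [HLp' HLm']]]]; rewrite E' in Hc2; simpl in Hc2; [contradiction|].
      set (x21 := (S2in p - L') / (alpha p * k3 p)).
      set (x12 := (S1in p - L) / (alpha p * k1 p)).
      assert (Hx21 : 0 < x21) by (apply div_pos; lra).
      assert (Hx12 : 0 < x12) by (apply div_pos; lra).
      destruct (sol2_ex p L' 0 x12 x21 P) as [x [[Hx0 Hxd] Hf]]; [nra|exact Hx21|].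
      unfold d2 in Hxd. unfold f2, g2 in Hf.
      replace (L' - alpha p * k2 p * (0 - x12) + alpha p * k3 p * (x21 - x))
        with (k2 p / k1 p * (S1in p - L) + S2in p - alpha p * k3 p * x) in Hf
        by (unfold x21, x12; fs).
      assert (HS22 : 0 <= k2 p / k1 p * (S1in p - L) + S2in p - alpha p * k3 p * x).
      { assert (Hq : alpha p * k3 p * x <= alpha p * k3 p * (x21 + (L' - alpha p * k2 p * (0 - x12)) / (alpha p * k3 p)))
          by (apply Rmult_le_compat_l; lra).
        replace (alpha p * k3 p * (x21 + (L' - alpha p * k2 p * (0 - x12)) / (alpha p * k3 p)))
          with (k2 p / k1 p * (S1in p - L) + S2in p) in Hq by (unfold x21, x12; fs). lra. }
      exists (mkState (S1in p) 0 L' x21 L x12 (k2 p / k1 p * (S1in p - L) + S2in p - alpha p * k3 p * x) x).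
      split.
      * unfold steady; simpl. rewrite HLm, HLm', Hf.
        repeat split; try lra; unfold x21, x12; fs.
      * unfold of_type; rewrite E, E'; simpl; fold x21 x12.
        split; [reflexivity|split; [reflexivity|]]. exists x.
        split; [split; [unfold d2; split; lra|]|split; [reflexivity|split; [lra|split; lra]]].
        unfold f2, g2.
        replace (L' - alpha p * k2 p * (0 - x12) + alpha p * k3 p * (x21 - x))
          with (k2 p / k1 p * (S1in p - L) + S2in p - alpha p * k3 p * x)
          by (unfold x21, x12; fs). exact Hf.
    +
      unfold Fij in Hc. destruct Hc as [Hc1 Hc2].
      destruct (lam1_one p I1 P) as [E|[L [E [HLp HLm]]]]; rewrite E in Hc1, Hc2; simpl in Hc1; [contradiction|].
      destruct (lam2_one p I1 i P) as [E'|[L' [E' [HLp' HLm']]]]; rewrite E' in Hc2.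
      { rewrite Fpinf in Hc2 by exact Hk12. simpl in Hc2. contradiction. }
      simpl in Hc2.
      destruct (X12_spec p L P E HLp HLm Hc1) as [HX [HX0 [HXa [HXb [HXf _]]]]].
      unfold f1, g1 in HXf. rewrite HX in HXf, HXa, HX0.
      assert (HS12 : 0 < S1in p - alpha p * k1 p * X12star p).
      { assert (Hq : alpha p * k1 p * X12star p < alpha p * k1 p * (S1in p / (alpha p * k1 p))) by (apply Rmult_lt_compat_l; lra).
        replace (alpha p * k1 p * (S1in p / (alpha p * k1 p))) with (S1in p) in Hq by fs. lra. }
      set (x11 := (S1in p - L) / (alpha p * k1 p)) in *.
      set (x21 := k2 p * (S1in p - (L + k1 p / k2 p * (L' + - S2in p))) / (alpha p * k1 p * k3 p)).
      assert (Hx21 : 0 < x21).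
      { apply div_pos; [nra|]. apply Rmult_lt_0_compat; lra. }
      destruct (sol2_ex p L' x11 (X12star p) x21 P) as [x [[Hx0 Hxd] Hf]]; [nra|exact Hx21|].
      unfold d2 in Hxd. unfold f2, g2 in Hf.
      replace (L' - alpha p * k2 p * (x11 - X12star p) + alpha p * k3 p * (x21 - x))
        with (S2in p + alpha p * k2 p * X12star p - alpha p * k3 p * x) in Hf
        by (unfold x21, x11; fs).
      assert (HS22 : 0 <= S2in p + alpha p * k2 p * X12star p - alpha p * k3 p * x).
      { assert (Hq : alpha p * k3 p * x <= alpha p * k3 p * (x21 + (L' - alpha p * k2 p * (x11 - X12star p)) / (alpha p * k3 p)))
          by (apply Rmult_le_compat_l; lra).
        replace (alpha p * k3 p * (x21 + (L' - alpha p * k2 p * (x11 - X12star p)) / (alpha p * k3 p)))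
          with (S2in p + alpha p * k2 p * X12star p) in Hq by (unfold x21, x11; fs). lra. }
      exists (mkState L x11 L' x21 (S1in p - alpha p * k1 p * X12star p) (X12star p)
                   (S2in p + alpha p * k2 p * X12star p - alpha p * k3 p * x) x).
      split.
      * unfold steady; simpl. rewrite HLm, HLm', HXf, Hf.
        repeat split; try lra; unfold x21, x11; fs.
      * unfold of_type, Fij; rewrite E, E'; simpl; fold x21 x11.
        split; [reflexivity|split; [reflexivity|]]. exists x.
        split; [split; [unfold d2; split; lra|]|split; [reflexivity|split; [lra|split; [lra|split; lra]]]].
        unfold f2, g2.
        replace (L' - alpha p * k2 p * (x11 - X12star p) + alpha p * k3 p * (x21 - x))
          with (S2in p + alpha p * k2 p * X12star p - alpha p * k3 p * x)
          by (unfold x21, x11; fs). exact Hf.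
Qed.

Theorem proposition2 (p : sys) :
  0 < D p -> 0 < r p < 1 -> 0 < alpha p < 1 ->
  0 < k1 p -> 0 < k2 p -> 0 < k3 p -> 0 < S1in p -> 0 < S2in p ->
  H1 (mu1 p) (m1 p) -> H2 (mu2 p) (S2m p) ->
  (forall xi, steady p xi -> exists t, of_type p t xi) /\
  (forall t, (exists xi, steady p xi /\ of_type p t xi) <-> cond p t).
Proof.
  intros HD Hr Ha Hk1 Hk2 Hk3 Hs1 Hs2 HH1 HH2.
  assert (P : hyps p).
  { constructor; try assumption; [apply H1_facts|apply H2_facts]; assumption. }
  split; [apply classify; exact P|apply exist_iff; exact P].
Qed.
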